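(* Let $P$ be a connected shrub on a finite set $I$ with at least two elements. Let $S$ be the set of vertices of height $1$ that cover every vertex of height $0$. In the graph obtained from the underlying graph of $P$ by removing all edges between elements of $S$ and vertices of height $0$, no vertex of $S$ lies in the same connected component as a vertex of height $0$.
   Context: A shrub $P$ on a finite set $I$ is a set $E$ of edges (unordered pairs $\{i,j\}$ of distinct elements of $I$) together with a height function $h_P:I\to\mathbb{N}$. Say that $j$ covers $i$ if $\{i,j\}\in E$ and $h_P(j)=h_P(i)+1$. The axioms are: (1) if $\{i,j\}\in E$ then $h_P(i)=h_P(j)\pm 1$; (2) if $h_P(j)>0$ then there is an edge $\{i,j\}$ with $h_P(i)=h_P(j)-1$; (3) there are no four distinct vertices $a,b,c,d$ such that $a$ covers $b$ and $c$, $c$ covers $d$, and $\{b,d\}\notin E$; (4) there are no five distinct vertices $a,b,c,d,e$ such that $a$ covers $c$ and $d$, $b$ covers $d$ and $e$, $\{a,e\}\notin E$ and $\{b,c\}\notin E$. A shrub is connected if its underlying graph $(I,E)$ is connected. *)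

(* Defs.v *)
From mathcomp Require Import all_boot.
Set Implicit Arguments. Unset Strict Implicit. Unset Printing Implicit Defensive.

(* A shrub on a finite type I: an edge relation E (symmetric, irreflexive,
   i.e. a set of unordered pairs of distinct elements) and a height h. *)
Section Shrub.
Variable I : finType.
Variables (E : rel I) (h : I -> nat).

(* j covers i *)
Definition covers (j i : I) : bool := E i j && (h j == (h i).+1).

Definition is_shrub : Prop :=
  symmetric E /\ irreflexive E /\
   (* (1) *) (forall i j, E i j -> h i = (h j).+1 \/ h j = (h i).+1) /\
   (* (2) *) (forall j, 0 < h j -> exists i, E i j /\ (h i).+1 = h j) /\
   (* (3) *) (forall a b c d : I, uniq [:: a; b; c; d] ->
                covers a b -> covers a c -> covers c d -> E b d) /\
   (* (4) *) (forall a b c d e : I, uniq [:: a; b; c; d; e] ->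
                covers a c -> covers a d -> covers b d -> covers b e ->
                E a e \/ E b c).

Definition connected_shrub : Prop := forall x y : I, connect E x y.

Definition S_set : {set I} :=
  [set s | (h s == 1) && [forall v, (h v == 0) ==> covers s v]].

Definition E_removed : rel I := fun x y =>
  E x y && ~~ (((x \in S_set) && (h y == 0)) || ((y \in S_set) && (h x == 0))).

End Shrub.

(* Main.v *)
Require Import Defs.
From mathcomp Require Import all_boot.
From mathcomp Require Import zify.

Inductive below {I : finType} (E : rel I) (h : I -> nat) : I -> I -> Prop :=
| bel_refl x : below E h x x
| bel_step x d w : covers E h x d -> below E h d w -> below E h x w.

Lemma below_le {I : finType} {E : rel I} {h : I -> nat} {x w} :
  below E h x w -> h w <= h x.
Proof.
elim=> [//|a d w' /andP[_ /eqP hd] _ IH]; lia.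
Qed.

Lemma below_inv (I : finType) (E : rel I) (h : I -> nat) x w :
  below E h x w -> w = x \/ exists d, covers E h x d /\ below E h d w.
Proof. case=> [|a d w' c b]; [by left | right; by exists d]. Qed.

Theorem mainTheorem2 (I : finType) (E : rel I) (h : I -> nat) :
  is_shrub E h -> connected_shrub E -> 2 <= #|I| ->
  forall s v : I, s \in S_set E h -> h v = 0 -> ~~ connect (E_removed E h) s v.
Proof.
move=> [Esym [Eirr [H1 [H2 [H3 H4]]]]] _ _ s v sS hv0.
have ne : forall a b, h a != h b -> a != b.
  by move=> a b; apply: contra => /eqP->.
have Sh : forall x, x \in S_set E h -> h x = 1.
  by move=> x; rewrite inE => /andP[/eqP -> _].
have Sc : forall x z, x \in S_set E h -> h z = 0 -> covers E h x z.
  by move=> x z; rewrite inE => /andP[_ /forallP Hf] hz; move/implyP: (Hf z); apply; apply/eqP.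
have A : forall a u x, covers E h a x -> covers E h a u -> x \in S_set E h ->
    h u = 1 -> u \in S_set E h.
  move=> a u x cax cau xS hu.
  rewrite inE hu eqxx /=; apply/forallP => z; apply/implyP => /eqP hz.
  have hx := Sh _ xS.
  case: (eqVneq u x) => [->|nux]; first exact: Sc.
  move: (cax) (cau) => /andP[_ /eqP ha] /andP[_ _].
  rewrite /covers hu hz eqxx andbT Esym.
  apply: (H3 a u x z) => //; last exact: Sc.
  rewrite /= !inE !negb_or nux !ne //=; apply/eqP; lia.
have C : forall y x x' d, covers E h y x -> covers E h y x' -> covers E h x' d ->
    2 <= h x -> covers E h x d.
  move=> y x x' d cyx cyx' cx'd hx.
  case: (eqVneq x x') => [->//|nxx'].
  move: (cyx) (cyx') (cx'd) => /andP[_ /eqP hy] /andP[_ /eqP hy'] /andP[_ /eqP hx'].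
  rewrite /covers; apply/andP; split; last by apply/eqP; lia.
  rewrite Esym; apply: (H3 y x x' d) => //.
  rewrite /= !inE !negb_or nxx' !ne //=; apply/eqP; lia.
pose P x := 0 < h x /\ forall w, below E h x w -> h w = 1 -> w \in S_set E h.
have step : forall x y, P x -> E_removed E h x y -> P y.
  move=> x y [hx0 Px] /andP[Exy Hn].
  case: (H1 x y Exy) => hxy.
  - have cxy : covers E h x y by rewrite /covers Esym Exy hxy eqxx.
    split.
      case: (posnP (h y)) => // hy0.
      have xS : x \in S_set E h by apply: Px; [constructor | lia].
      by move: Hn; rewrite xS hy0 eqxx.
    move=> w bw; apply: Px; exact: bel_step cxy bw.
  - have cyx : covers E h y x by rewrite /covers Exy hxy eqxx.
    split; first by rewrite hxy.
    move=> w bw hw; case/below_inv: bw hw => [->|[x' [cyx' bx'w]] hw]; first lia.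
    move: (cyx') => /andP[_ /eqP hy'].
    case: (ltnP 1 (h x)) => hx.
    + case/below_inv: bx'w hw => [->|[d [cx'd bdw]] hw]; first lia.
      apply: Px => //; apply: bel_step _ bdw; exact: C cyx cyx' cx'd _.
    + have hx1 : h x = 1 by lia.
      have xS : x \in S_set E h by apply: Px; [constructor | done].
      case/below_inv: bx'w hw => [->|[d [cx'd bdw]] hw].
        by move=> hw; exact: A cyx cyx' xS hw.
      move: (below_le bdw) (cx'd) => + /andP[_ /eqP]; lia.
have Ps : P s.
  split; first by rewrite Sh.
  move=> w bw hw; case/below_inv: bw hw => [->//|[d [cxd bdw]] hw].
  move: (below_le bdw) (cxd) (Sh _ sS) => + /andP[_ /eqP]; lia.
apply/negP => /connectP [p pth lst].
have : P (last s p).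
  elim: p s Ps pth {lst sS} => [//|y p IH] x Px /= /andP[exy pth].
  exact: IH (step _ _ Px exy) pth.
by rewrite -lst => -[]; rewrite hv0.
Qed.
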